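(* For every extended directed co-graph $G$, $\mathrm{dpw}(G)=\mathrm{dtw}(G)$.
   Context: Digraphs are finite, without loops or multiple arcs. For vertex-disjoint digraphs $G_1,\ldots,G_k$: the series composition $G_1\otimes\cdots\otimes G_k$ is their disjoint union plus all arcs in both directions between vertices of $G_i$ and $G_j$ for all $i\ne j$; a directed union $G_1\ominus\cdots\ominus G_k$ is any digraph obtained from their disjoint union by adding some (possibly none or all) arcs from vertices of $G_i$ to vertices of $G_j$ with $i<j$. Extended directed co-graphs: every single-vertex digraph is one, and if $G_1,\ldots,G_k$ are vertex-disjoint extended directed co-graphs then every directed union of them and their series composition are extended directed co-graphs. Directed path-width: a directed path-decomposition of $G=(V,E)$ is a sequence $(X_1,\ldots,X_r)$ of subsets of $V$ with $\bigcup X_i=V$, for each arc $(u,v)$ some $i\le j$ with $u\in X_i,v\in X_j$, and for each vertex the bags containing it having consecutive indices; width $\max|X_i|-1$; $\mathrm{dpw}(G)$ is the minimum width. Directed tree-width: for $Z\subseteq V$, $S\subseteq V$ is $Z$-normal if no directed walk in $G-Z$ with first and last vertex in $S$ uses a vertex of $G-(Z\cup S)$. A directed tree-decomposition is $(T,\mathcal{X},\mathcal{W})$ with $T=(V_T,E_T)$ an out-tree (rooted, arcs directed away from root; $u\le v$ means a directed path of $\ge0$ arcs from $u$ to $v$), $\mathcal{X}=\{X_e:e\in E_T\}$, $\mathcal{W}=\{W_r:r\in V_T\}$ subsets of $V$, such that $\mathcal{W}$ partitions $V$ into nonempty sets and for each $(u,v)\in E_T$ the set $\bigcup\{W_r: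 v\le r\}$ is $X_{(u,v)}$-normal; width $\max_r|W_r\cup\bigcup_{e\sim r}X_e|-1$ ($e\sim r$: $r$ is an end of $e$); $\mathrm{dtw}(G)$ is the minimum width. *)

(* Defs.v *)
From mathcomp Require Import all_boot.
From Stdlib Require Import ClassicalEpsilon.

Set Implicit Arguments.
Unset Strict Implicit.
Unset Printing Implicit Defensive.

(* A digraph is given by a vertex set V : {set T} and an arc set
   E : {set T * T} inside an ambient finite type T. *)

Section Digraphs.
Variable T : finType.

Definition induced (E : {set T * T}) (A : {set T}) : {set T * T} :=
  [set e in E | (e.1 \in A) && (e.2 \in A)].

Definition ordered_parts (P : seq {set T}) (V : {set T}) : Prop :=
  [/\ 0 < size P,
      (forall i j, i < j -> j < size P ->
         [disjoint nth set0 P i & nth set0 P j]) &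
      \bigcup_(A <- P) A = V].

(* The parts G_i are the induced subdigraphs
   on the blocks of P; "series" adds all arcs in both directions between
   different blocks, "directed union" only allows arcs from a block with
   smaller index to a block with larger index (any such set of arcs). *)
Inductive ext_dcograph : {set T} -> {set T * T} -> Prop :=
| edc_single (v : T) : ext_dcograph [set v] set0
| edc_series (V : {set T}) (E : {set T * T}) (P : seq {set T}) :
    ordered_parts P V ->
    E \subset setX V V ->
    (forall A, A \in P -> ext_dcograph A (induced E A)) ->
    (forall i j u v, i < size P -> j < size P -> i != j ->
       u \in nth set0 P i -> v \in nth set0 P j -> (u, v) \in E) ->
    ext_dcograph V E
| edc_dunion (V : {set T}) (E : {set T * T}) (P : seq {set T}) :
    ordered_parts P V ->
    E \subset setX V V ->
    (forall A, A \in P -> ext_dcograph A (induced E A)) ->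
    (forall i j u v, i < size P -> j < size P ->
       u \in nth set0 P i -> v \in nth set0 P j -> (u, v) \in E -> i <= j) ->
    ext_dcograph V E.

Definition is_dpath_decomp (V : {set T}) (E : {set T * T}) (X : seq {set T})
  : Prop :=
  [/\ (forall B, B \in X -> B \subset V),
      \bigcup_(B <- X) B = V,
      (forall u v, (u, v) \in E ->
         exists i j, [/\ i <= j, j < size X,
                         u \in nth set0 X i & v \in nth set0 X j]) &
      (forall x i j k, i <= j -> j <= k -> k < size X ->
         x \in nth set0 X i -> x \in nth set0 X k -> x \in nth set0 X j)].

Definition dpath_width (X : seq {set T}) : nat := (\max_(B <- X) #|B|) - 1.

Definition out_tree (I : finType) (ET : rel I) : Prop :=
  exists r : I,
    [/\ (forall u, ~~ ET u r),
        (forall v, v != r -> exists! u, ET u v) &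
        (forall v, connect ET r v)].

Definition dwalk (E : {set T * T}) (x : T) (p : seq T) : bool :=
  path (fun a b => (a, b) \in E) x p.

Definition normal (V : {set T}) (E : {set T * T}) (Z S : {set T}) : Prop :=
  forall x p, dwalk E x p ->
    all (fun y => y \in V :\: Z) (x :: p) ->
    x \in S -> last x p \in S ->
    all (fun y => y \in S :|: Z) (x :: p).

Definition is_dtree_decomp (V : {set T}) (E : {set T * T})
  (I : finType) (ET : rel I) (X : I -> I -> {set T}) (W : I -> {set T})
  : Prop :=
  [/\ out_tree ET,
      (forall u v, ET u v -> X u v \subset V),
      [/\ (forall r, W r != set0),
           (forall r s, r != s -> [disjoint W r & W s]) &
           \bigcup_(r : I) W r = V] &
      (forall u v, ET u v ->
         normal V E (X u v) (\bigcup_(r | connect ET v r) W r))].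

Definition dtree_bag (I : finType) (ET : rel I) (X : I -> I -> {set T})
  (W : I -> {set T}) (r : I) : {set T} :=
  W r :|: (\bigcup_(u | ET u r) X u r) :|: (\bigcup_(v | ET r v) X r v).

Definition dtree_width (I : finType) (ET : rel I) (X : I -> I -> {set T})
  (W : I -> {set T}) : nat :=
  (\max_(r : I) #|dtree_bag ET X W r|) - 1.

End Digraphs.

Definition min_nat (P : nat -> Prop) : nat :=
  epsilon (inhabits 0) (fun n => P n /\ forall m, P m -> n <= m).

Definition dpw (T : finType) (V : {set T}) (E : {set T * T}) : nat :=
  min_nat (fun k => exists X, is_dpath_decomp V E X /\ dpath_width X = k).

Definition dtw (T : finType) (V : {set T}) (E : {set T * T}) : nat :=
  min_nat (fun k => exists (I : finType) (ET : rel I)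
                      (X : I -> I -> {set T}) (W : I -> {set T}),
                      is_dtree_decomp V E ET X W /\ dtree_width ET X W = k).

(* Main.v *)
Require Import Defs.
From mathcomp Require Import all_boot.
From mathcomp Require Import zify.
From Stdlib Require Import ClassicalEpsilon.
Set Implicit Arguments.
Unset Strict Implicit.
Unset Printing Implicit Defensive.
Section Gen.
Variable T : finType.
Implicit Types (V Z S C U : {set T}) (E : {set T * T}).

Definition sconn E U C := forall x y, x \in C -> y \in C ->
  exists p, [&& dwalk E x p, all (fun z => z \in U) p & last x p == y].

Definition hv_ok V E C Z := [/\ C != set0, C \subset V :\: Z & sconn E (V :\: Z) C].

Definition haven V E k (b : {set T} -> {set T}) :=
  (forall Z, #|Z| <= k -> hv_ok V E (b Z) Z) /\
  (forall Z Z', Z \subset Z' -> #|Z'| <= k -> b Z' \subset b Z).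

Lemma sconn_mono E U U' C : U \subset U' -> sconn E U C -> sconn E U' C.
Proof.
move=> sU sc x y xC yC; have [p /and3P[w a l]] := sc x y xC yC.
exists p; rewrite w l andbT /=; apply/allP=> z zp.
by apply: (subsetP sU); apply: (allP a).
Qed.

Lemma sconn_normal V E Z S C y : C \subset V :\: Z -> sconn E (V :\: Z) C ->
  normal V E Z S -> y \in C -> y \in S -> C \subset S.
Proof.
move=> sC sc nS yC yS; apply/subsetP=> z zC.
have [p1 /and3P[w1 a1 /eqP l1]] := sc y z yC zC.
have [p2 /and3P[w2 a2 /eqP l2]] := sc z y zC yC.
have := nS y (p1 ++ p2).
rewrite /dwalk in w1 w2 *; rewrite cat_path w1 /= l1 w2 /= last_cat l1 l2 /= all_cat a1 a2 (subsetP sC) //.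
move=> /(_ isT isT yS yS) /andP[_]; rewrite all_cat => /andP[/allP H _].
have : z \in y :: p1 by rewrite -l1 mem_last.
rewrite inE => /orP[/eqP->|zp]; first by [].
have := H z zp; rewrite inE => /orP[//|zZ].
by have := subsetP sC z zC; rewrite inE zZ.
Qed.

Lemma out_tree_acyc (I : finType) (ET : rel I) : out_tree ET ->
  forall u v, ET u v -> ~~ connect ET v u.
Proof.
case=> r [nr uq reach].
pose oncyc w := exists u, ET w u /\ connect ET u w.
have pred_of : forall a, oncyc a -> exists b, ET b a /\ connect ET a b.
  move=> a [u [au /connectP[q pq aE]]].
  elim/last_ind: q pq aE => [|q c _] /=.
    by move=> _ aE; exists a; split; rewrite // {2}aE.
  rewrite rcons_path last_rcons => /andP[pq lc] aE.
  exists (last u q); split; first by rewrite aE.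
  apply: (connect_trans (connect1 au)).
  by apply/connectP; exists q.
have noc : forall w, ~ oncyc w.
  move=> w; have /connectP[p pp ->] := reach w.
  elim/last_ind: p pp => [|p a IH] /=.
    move=> _ /pred_of[b [br _]]; by have := nr b; rewrite br.
  rewrite rcons_path last_rcons => /andP[pp pa] /pred_of[b [ba ab]].
  apply: (IH pp); exists a; split=> //.
  idtac.
  have ar : a != r by apply/eqP=> ar; move: pa; rewrite ar (negbTE (nr _)).
  have [u0 [_ H]] := uq a ar.
  by rewrite -(H _ pa) (H _ ba).
move=> u v uv; apply/negP=> vu; apply: (noc u); exists v; split=> //.
Qed.

Lemma haven_lb V E k b (I : finType) (ET : rel I) X W :
  haven V E k b -> is_dtree_decomp V E ET X W ->
  k < \max_(r : I) #|dtree_bag ET X W r|.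
Proof.
move=> [hok hmon] [ot sX [Wne Wdis WV] nrm].
rewrite ltnNge; apply/negP=> /bigmax_leqP Hk.
have Hb : forall r, #|dtree_bag ET X W r| <= k by move=> r; apply: Hk.
pose S c := \bigcup_(r | connect ET c r) W r.
have Xin : forall c c', ET c c' -> X c c' \subset dtree_bag ET X W c.
  move=> c c' cc'; apply/subsetP=> x xX; rewrite /dtree_bag !inE.
  by apply/orP; right; apply/bigcupP; exists c'.
have Xin' : forall c c', ET c c' -> X c c' \subset dtree_bag ET X W c'.
  move=> c c' cc'; apply/subsetP=> x xX; rewrite /dtree_bag !inE.
  by apply/orP; left; apply/orP; right; apply/bigcupP; exists c.
have Win : forall c, W c \subset dtree_bag ET X W c.
  by move=> c; apply/subsetP=> x xW; rewrite /dtree_bag !inE xW.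
have claim : forall n c, #|[set r | connect ET c r]| <= n ->
    b (dtree_bag ET X W c) \subset S c -> False.
  elim=> [|n IH] c.
    rewrite leqn0 => /eqP/cards0_eq/setP/(_ c); by rewrite !inE connect0.
  move=> Hc Hsub.
  have [bne bsub bsc] := hok _ (Hb c).
  have [y yb] := set0Pn _ bne.
  have /bigcupP[r cr yr] := subsetP Hsub y yb.
  have rc : r != c.
    apply/eqP=> rc; move: (subsetP bsub y yb); rewrite inE => /andP[/negP[]].
    by apply: (subsetP (Win c)); rewrite -rc.
  have [c' [cc' c'r]] : exists c', ET c c' /\ connect ET c' r.
    move/connectP: cr => [[|c' p] /= pp rE]; first by rewrite rE eqxx in rc.
    case/andP: pp => cc' pp; exists c'; split=> //; apply/connectP; by exists p.
  have yS' : y \in S c' by apply/bigcupP; exists r.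
  have sXc := Xin _ _ cc'.
  have sub1 : b (dtree_bag ET X W c) \subset V :\: X c c'.
    apply: (subset_trans bsub); apply/subsetP=> x; rewrite !in_setD => /andP[xn ->].
    by rewrite andbT; apply: (contra (subsetP sXc x)) xn.
  have sVV : V :\: dtree_bag ET X W c \subset V :\: X c c'.
    apply/subsetP=> x; rewrite !in_setD => /andP[xn ->].
    by rewrite andbT; apply: (contra (subsetP sXc x)) xn.
  have cardX : #|X c c'| <= k by apply: leq_trans (subset_leq_card sXc) (Hb c).
  have [_ xsub xsc] := hok _ cardX.
  have m1 := hmon _ _ sXc (Hb c).
  have yX : y \in b (X c c') by apply: (subsetP m1).
  have bXS := sconn_normal xsub xsc (nrm _ _ cc') yX yS'.
  have m2 := hmon _ _ (Xin' _ _ cc') (Hb c').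
  apply: (IH c'); last by apply: subset_trans m2 bXS.
  rewrite -ltnS; apply: leq_trans Hc; apply: proper_card; apply/properP; split.
    apply/subsetP=> x; rewrite !inE; apply: connect_trans; exact: connect1.
  exists c; rewrite !inE ?connect0 //.
  exact: (out_tree_acyc ot cc').
have [r0 [_ _ reach]] := ot.
apply: (claim #|[set r | connect ET r0 r]| r0 (leqnn _)).
have [_ bsub _] := hok _ (Hb r0).
apply: (subset_trans bsub); apply/subsetP=> x; rewrite inE => /andP[_].
rewrite -WV => /bigcupP[r _ xr]; apply/bigcupP; exists r => //; exact: reach.
Qed.

Lemma min_natP (P : nat -> Prop) m : P m ->
  P (min_nat P) /\ forall n, P n -> min_nat P <= n.
Proof.
move=> Pm.
have : exists n, P n /\ forall m, P m -> n <= m.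
  elim/ltn_ind: m Pm => m IH Pm.
  case: (classic (exists m', m' < m /\ P m')) => [[m' [lt Pm']]|H].
    exact: IH lt Pm'.
  exists m; split=> // m' Pm'; rewrite leqNgt; apply/negP=> lt.
  by apply: H; exists m'.
move=> ex; exact: (epsilon_spec (inhabits 0) _ ex).
Qed.
End Gen.
Section Conv.
Variable T : finType.
Implicit Types (V Z S C U : {set T}) (E : {set T * T}) (X : seq {set T}).

Lemma bigcup_seqP (v : T) X :
  reflect (exists2 B, B \in X & v \in B) (v \in \bigcup_(B <- X) B).
Proof.
rewrite bigcup_seq; apply: (iffP bigcupP) => [[B BX vB]|[B BX vB]]; by exists B.
Qed.

Lemma succ_conn n (i j : 'I_n) :
  connect (fun a b : 'I_n => val b == (val a).+1) i j = (i <= j).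
Proof.
apply/idP/idP.
  move/connectP=> [p pp ->]; elim: p i pp => [|c p IH] i //= /andP[/eqP ci pp].
  by apply: leq_trans (IH _ pp); rewrite ci.
move=> ij; have [d jd] : exists d, val j = i + d by exists (j - i); rewrite subnKC.
elim: d i jd {ij} => [|d IH] i jd.
  by have -> : j = i by apply: val_inj; rewrite jd addn0.
have lt : i.+1 < n by apply: leq_ltn_trans (ltn_ord j); rewrite jd addnS ltnS leq_addr.
apply: (@connect_trans _ _ (Ordinal lt)); first by apply: connect1; rewrite /= eqxx.
by apply: IH; rewrite jd /= addnS addSn.
Qed.

Lemma pd_to_td V E X : 0 < #|V| -> is_dpath_decomp V E X ->
  exists (I : finType) (ET : rel I) (Xt : I -> I -> {set T}) (W : I -> {set T}),
    is_dtree_decomp V E ET Xt W /\ dtree_width ET Xt W <= dpath_width X.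
Proof.
move=> Vpos [sub UV arc cons].
have /card_gt0P[x0 _] := Vpos.
pose fi v := find (fun B : {set T} => v \in B) X.
have fiP : forall v, v \in V -> fi v < size X /\ v \in nth set0 X (fi v).
  move=> v; rewrite -UV => /bigcup_seqP[B BX vB].
  have hs : has (fun B : {set T} => v \in B) X by apply/hasP; exists B.
  by split; [rewrite -has_find | exact: (nth_find set0 hs)].
have fimin : forall v i, v \in nth set0 X i -> fi v <= i.
  move=> v i vi; rewrite leqNgt; apply/negP=> lt.
  by have := before_find set0 lt; rewrite vi.
pose leT := fun u w => fi u <= fi w.
pose s := sort leT (enum V).
pose n := #|V|.
have sz : size s = n by rewrite size_sort /n cardE.
have us : uniq s by rewrite sort_uniq enum_uniq.
have ms : forall x, (x \in s) = (x \in V) by move=> x; rewrite mem_sort mem_enum.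
have srt : sorted leT s by apply: sort_sorted => u w; apply: leq_total.
have mono : forall i j, i <= j -> j < n -> fi (nth x0 s i) <= fi (nth x0 s j).
  move=> i j ij jn.
  apply: (sorted_leq_nth (leT := leT) _ _ x0 srt) => //.
  - by move=> y x z; apply: leq_trans.
  - by move=> x; apply: leqnn.
  - by rewrite inE sz (leq_ltn_trans ij jn).
  - by rewrite inE sz.
pose vt (i : 'I_n) := nth x0 s i.
have vtV : forall i, vt i \in V by move=> i; rewrite -ms mem_nth // sz.
have vtinj : forall i j, vt i = vt j -> i = j.
  move=> i j /eqP; rewrite /vt nth_uniq ?sz // => /eqP; apply: val_inj.
have vtsurj : forall v, v \in V -> exists i, vt i = v.
  move=> v vV; have lt : index v s < n by rewrite -sz index_mem ms.
  by exists (Ordinal lt); rewrite /vt nth_index // ms.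
pose ET := fun a b : 'I_n => val b == (val a).+1.
pose W := fun i : 'I_n => [set vt i].
pose Xt := fun i j : 'I_n => nth set0 X (fi (vt i)) :&: nth set0 X (fi (vt j)).
have nthV : forall i, i < size X -> nth set0 X i \subset V.
  by move=> i lt; apply: sub; apply: mem_nth.
have bagsub : forall r, dtree_bag ET Xt W r \subset nth set0 X (fi (vt r)).
  move=> r; apply/subsetP=> x; rewrite /dtree_bag !inE => /orP[/orP[xW|]|].
  - by rewrite (eqP xW); case: (fiP _ (vtV r)).
  - by move=> /bigcupP[u _]; rewrite inE => /andP[_ ->].
  - by move=> /bigcupP[u _]; rewrite inE => /andP[-> _].
exists 'I_n, ET, Xt, W; split; last first.
  rewrite /dtree_width /dpath_width leq_sub2r //.
  apply/bigmax_leqP => r _.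
  apply: leq_trans (subset_leq_card (bagsub r)) _.
  apply: leq_bigmax_seq => //; apply: mem_nth; by case: (fiP _ (vtV r)).
split.
- exists (Ordinal Vpos); split.
  + by move=> u; rewrite /ET.
  + move=> v vr.
    have v0 : 0 < val v by rewrite lt0n; apply: contra vr => /eqP v0; apply/eqP/val_inj.
    have lt : (val v).-1 < n by apply: leq_ltn_trans (leq_pred _) (ltn_ord v).
    exists (Ordinal lt); split; first by rewrite /ET /= prednK.
    move=> u' /eqP uv; apply: val_inj => /=; by rewrite uv.
  + by move=> v; rewrite succ_conn.
- move=> u v _; apply: subset_trans (subsetIl _ _) (nthV _ _); by case: (fiP _ (vtV u)).
- split.
  + by move=> r; apply/set0Pn; exists (vt r); rewrite inE.
  + move=> r s' rs; rewrite disjoints1 inE; apply: contra rs => /eqP e.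
    by apply/eqP; apply: vtinj.
  + apply/setP=> x; apply/bigcupP/idP => [[r _]|xV]; first by rewrite inE => /eqP->.
    by have [i <-] := vtsurj _ xV; exists i; rewrite ?inE.
move=> u v /eqP uv.
pose S := \bigcup_(r | connect ET v r) W r.
have SP : forall y, y \in S -> exists j : 'I_n, v <= j /\ y = vt j.
  by move=> y /bigcupP[j]; rewrite succ_conn inE => vj /eqP ->; exists j.
have step : forall y z, y \in S -> (y, z) \in E -> z \in V :\: Xt u v -> z \in S.
  move=> y z /SP[j [vj ->]] yz; rewrite inE => /andP[zX zV].
  have [j' zj] := vtsurj _ zV.
  case: (leqP v j') => vj'; first by apply/bigcupP; exists j'; rewrite ?succ_conn // -zj inE.
  have j'u : j' <= u by rewrite -ltnS -uv.
  have [i1 [i2 [i12 i2s yi1 zi2]]] := arc _ _ yz.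
  have h1 := fimin _ _ yi1.
  have h2 : fi (vt v) <= fi (vt j) := mono _ _ vj (ltn_ord j).
  have h3 : fi (vt j') <= fi (vt u) := mono _ _ j'u (ltn_ord u).
  have uvle : val u <= val v by rewrite uv.
  have h4 : fi (vt u) <= fi (vt v) := mono _ _ uvle (ltn_ord v).
  have [_ zf] := fiP _ zV.
  have zu : z \in nth set0 X (fi (vt u)).
    apply: (cons _ (fi z) _ i2) => //; first by rewrite -zj.
    by apply: leq_trans h4 (leq_trans h2 (leq_trans h1 i12)).
  have zv : z \in nth set0 X (fi (vt v)).
    apply: (cons _ (fi z) _ i2) => //; first by rewrite -zj (leq_trans h3 h4).
    by apply: leq_trans h2 (leq_trans h1 i12).
  by move: zX; rewrite inE zu zv.
have allS : forall p x, dwalk E x p -> all (fun y => y \in V :\: Xt u v) (x :: p) ->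
    x \in S -> all (fun y => y \in S) (x :: p).
  elim=> [|y p IH] x /=; first by move=> _ _ ->.
  move=> /andP[xy wp] /and3P[_ yVZ ap] xS; rewrite xS /=.
  by apply: IH => //; [rewrite /= yVZ | exact: step xS xy yVZ].
move=> x p wp ap xS _; apply: sub_all (allS p x wp ap xS) => y yS.
by rewrite inE yS.
Qed.
End Conv.
Section Main.
Variable T : finType.
Implicit Types (V Z S C U A : {set T}) (E : {set T * T}) (X : seq {set T}).

Lemma bigcup_nthP (v : T) X :
  reflect (exists i, i < size X /\ v \in nth set0 X i) (v \in \bigcup_(B <- X) B).
Proof.
apply: (iffP (bigcup_seqP v X)) => [[B BX vB]|[i [lt vi]]].
  by exists (index B X); rewrite index_mem nth_index.
by exists (nth set0 X i) => //; apply: mem_nth.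
Qed.

Lemma inducedP E A u v :
  ((u, v) \in induced E A) = [&& (u, v) \in E, u \in A & v \in A].
Proof. by rewrite inE. Qed.

Lemma dwalk_induced E A x p : dwalk (induced E A) x p -> dwalk E x p.
Proof.
apply: sub_path => a b; rewrite /= inducedP; by case/andP.
Qed.

Lemma sconn_induced E A U C : sconn (induced E A) U C -> sconn E U C.
Proof.
move=> sc x y xC yC; have [p /and3P[w a l]] := sc x y xC yC.
by exists p; rewrite (dwalk_induced w) a l.
Qed.

Lemma induced_full E V : E \subset setX V V -> induced E V = E.
Proof.
move=> sE; apply/setP=> [[u v]]; rewrite inducedP.
case uv: ((u, v) \in E) => //=.
by have := subsetP sE _ uv; rewrite inE.
Qed.

Lemma hv_lift V E A C Z : A \subset V ->
  hv_ok A (induced E A) C (Z :&: A) -> hv_ok V E C Z.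
Proof.
move=> sA [ne sub sc]; split=> //.
  apply: (subset_trans sub); apply/subsetP=> x; rewrite !inE => /andP[H xA].
  by rewrite (subsetP sA) // andbT; move: H; rewrite xA andbT.
apply: (sconn_mono _ (sconn_induced sc)).
apply/subsetP=> x; rewrite !inE => /andP[H xA].
by rewrite (subsetP sA) // andbT; move: H; rewrite xA andbT.
Qed.

Lemma cat_pd E V1 V2 X1 X2 : [disjoint V1 & V2] ->
  is_dpath_decomp V1 (induced E V1) X1 -> is_dpath_decomp V2 (induced E V2) X2 ->
  (forall u v, (u, v) \in E -> u \in V2 -> v \in V1 -> False) ->
  is_dpath_decomp (V1 :|: V2) (induced E (V1 :|: V2)) (X1 ++ X2).
Proof.
move=> dis [s1 U1 a1 c1] [s2 U2 a2 c2] noback.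
have nthL : forall i, i < size X1 -> nth set0 (X1 ++ X2) i = nth set0 X1 i.
  by move=> i lt; rewrite nth_cat lt.
have nthR : forall i, nth set0 (X1 ++ X2) (size X1 + i) = nth set0 X2 i.
  by move=> i; rewrite nth_cat ltnNge leq_addr /= addKn.
have in1 : forall i x, i < size X1 -> x \in nth set0 X1 i -> x \in V1.
  by move=> i x lt xi; exact: (subsetP (s1 _ (mem_nth set0 lt))) x xi.
have in2 : forall i x, i < size X2 -> x \in nth set0 X2 i -> x \in V2.
  by move=> i x lt xi; exact: (subsetP (s2 _ (mem_nth set0 lt))) x xi.
have nboth : forall x, x \in V1 -> x \in V2 -> False.
  by move=> x x1 x2; have := disjointFr dis x1; rewrite x2.
split.
- move=> B; rewrite mem_cat => /orP[BX|BX].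
    by apply: subset_trans (s1 _ BX) (subsetUl _ _).
  by apply: subset_trans (s2 _ BX) (subsetUr _ _).
- by rewrite big_cat /= U1 U2.
- move=> u v; rewrite inducedP !inE => /and3P[uv uV vV].
  case/orP: uV => u1; case/orP: vV => v1.
  + have h : (u, v) \in induced E V1 by rewrite inducedP uv u1 v1.
    have [i [j [ij js ui vj]]] := a1 u v h.
    exists i, j; rewrite size_cat !nthL //; last by apply: leq_ltn_trans ij js.
    by split=> //; apply: leq_trans js (leq_addr _ _).
  + move: u1; rewrite -U1 => /bigcup_nthP[i [ilt ui]].
    move: v1; rewrite -U2 => /bigcup_nthP[j [jlt vj]].
    exists i, (size X1 + j); rewrite nthL // nthR size_cat; split=> //; lia.
  + by case: (noback u v uv u1 v1).
  + have h : (u, v) \in induced E V2 by rewrite inducedP uv u1 v1.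
    have [i [j [ij js ui vj]]] := a2 u v h.
    exists (size X1 + i), (size X1 + j); rewrite !nthR size_cat; split=> //; lia.
- move=> x i j k ij jk; rewrite size_cat => ks xi xk.
  case: (ltnP k (size X1)) => kl.
    have il : i < size X1 by lia.
    have jl : j < size X1 by lia.
    move: xi xk; rewrite (nthL i) // (nthL k) // (nthL j) //; exact: c1 ij jk kl.
  case: (ltnP i (size X1)) => il.
    rewrite nthL // in xi.
    have := nthR (k - size X1); rewrite subnKC // => e; rewrite e in xk.
    case: (nboth x (in1 _ _ il xi) (in2 _ _ _ xk)); lia.
  have := nthR (i - size X1); rewrite subnKC // => e; rewrite e in xi.
  have := nthR (k - size X1); rewrite subnKC // => e'; rewrite e' in xk.
  have := nthR (j - size X1); rewrite subnKC ?(leq_trans il ij) // => ->.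
  apply: (c2 x (i - size X1) _ (k - size X1)) => //; lia.
Qed.

Lemma in_nth (P : seq {set T}) A : A \in P -> exists2 i, i < size P & A = nth set0 P i.
Proof. by move=> AP; exists (index A P); rewrite ?index_mem ?nth_index. Qed.

Lemma dunion_pd E (P : seq {set T}) (Xf : {set T} -> seq {set T}) :
  (forall i j, i < j -> j < size P -> [disjoint nth set0 P i & nth set0 P j]) ->
  (forall A, A \in P -> is_dpath_decomp A (induced E A) (Xf A)) ->
  (forall i j u v, i < size P -> j < size P -> u \in nth set0 P i ->
     v \in nth set0 P j -> (u, v) \in E -> i <= j) ->
  is_dpath_decomp (\bigcup_(A <- P) A) (induced E (\bigcup_(A <- P) A))
    (flatten (map Xf P)).
Proof.
elim: P => [|A P IH] dis hX fw /=.
  rewrite big_nil; split=> //.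
  - by rewrite big_nil.
  - by move=> u v; rewrite inducedP inE andbF.
rewrite big_cons; apply: cat_pd.
- rewrite bigcup_seq; apply/bigcup_disjointP => B /in_nth[j jlt ->].
  by apply: (dis 0 j.+1).
- by apply: hX; rewrite inE eqxx.
- apply: IH.
  + by move=> i j ij js; apply: (dis i.+1 j.+1).
  + by move=> B BP; apply: hX; rewrite inE BP orbT.
  + by move=> i j u v il jl ui vj uv; have := fw i.+1 j.+1 u v il jl ui vj uv.
- move=> u v uv /bigcup_nthP[j [jl uj]] vA.
  by have := fw j.+1 0 u v jl isT uj vA uv.
Qed.

Lemma fin_choice (P : seq {set T})
  (R : {set T} -> nat -> ({set T} -> {set T}) -> seq {set T} -> Prop) :
  (forall A, A \in P -> exists k b X, R A k b X) ->
  exists (K : {set T} -> nat) (Bf : {set T} -> {set T} -> {set T})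
         (Xf : {set T} -> seq {set T}),
    forall A, A \in P -> R A (K A) (Bf A) (Xf A).
Proof.
elim: P => [|a P IH] H.
  by exists (fun _ => 0), (fun _ _ => set0), (fun _ => [::]).
have [ka [ba [Xa Ra]]] := H a (mem_head a P).
have [K [Bf [Xf HR]]] := IH (fun A AP => H A (mem_behead (s := a :: P) AP)).
exists (fun A => if A == a then ka else K A),
       (fun A => if A == a then ba else Bf A),
       (fun A => if A == a then Xa else Xf A).
move=> A; rewrite inE; case: eqP => [->|_] //= AP; exact: HR.
Qed.

Lemma argmax_seq (P : seq {set T}) (g : {set T} -> nat) : 0 < size P ->
  exists2 A, A \in P & forall A', A' \in P -> g A' <= g A.
Proof.
elim: P => [|a P IH] //= _.
case: P IH => [|b P] IH.
  by exists a; rewrite ?inE // => A'; rewrite inE => /eqP->.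
have [A AP HA] := IH isT.
case: (leqP (g a) (g A)) => h.
  exists A; first by rewrite inE AP orbT.
  by move=> A'; rewrite inE => /orP[/eqP->//|]; apply: HA.
exists a; first by rewrite inE eqxx.
move=> A'; rewrite inE => /orP[/eqP->//|/HA]; move=> h'; apply: leq_trans h' (ltnW h).
Qed.

Lemma argmin_seq (P : seq {set T}) (g : {set T} -> nat) : 0 < size P ->
  exists2 A, A \in P & forall A', A' \in P -> g A <= g A'.
Proof.
elim: P => [|a P IH] //= _.
case: P IH => [|b P] IH.
  by exists a; rewrite ?inE // => A'; rewrite inE => /eqP->.
have [A AP HA] := IH isT.
case: (leqP (g A) (g a)) => h.
  exists A; first by rewrite inE AP orbT.
  by move=> A'; rewrite inE => /orP[/eqP->//|]; apply: HA.
exists a; first by rewrite inE eqxx.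
move=> A'; rewrite inE => /orP[/eqP->//|/HA]; move=> h'; apply: leq_trans (ltnW h) h'.
Qed.

Lemma parts_sub (P : seq {set T}) V A : ordered_parts P V -> A \in P -> A \subset V.
Proof.
case=> _ _ <- AP; apply/subsetP=> x xA; apply/bigcup_seqP; by exists A.
Qed.

Lemma parts_dis (P : seq {set T}) V A A' : ordered_parts P V -> A \in P -> A' \in P ->
  A != A' -> [disjoint A & A'].
Proof.
case=> _ dis _ /in_nth[i il ->] /in_nth[j jl ->] ne.
case: (ltngtP i j) => h.
- exact: dis.
- rewrite disjoint_sym; exact: dis.
- by rewrite h eqxx in ne.
Qed.

Lemma parts_mem (P : seq {set T}) V v : ordered_parts P V -> v \in V ->
  exists i, i < size P /\ v \in nth set0 P i.
Proof. by case=> _ _ <- /bigcup_nthP. Qed.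

End Main.
Section Main2.
Variable T : finType.
Implicit Types (V Z S C U A : {set T}) (E : {set T * T}) (X : seq {set T}).

Definition good V E k b X := [/\ haven V E k b, k < #|V|, is_dpath_decomp V E X &
  forall B, B \in X -> #|B| <= k.+1].

Lemma good_single (v : T) : good [set v] set0 0 (fun _ => [set v]) [:: [set v]].
Proof.
split.
- split; last by move=> *; apply: subxx.
  move=> Z; rewrite leqn0 => /eqP/cards0_eq ->; split.
  + by apply/set0Pn; exists v; rewrite inE.
  + by rewrite setD0.
  + move=> x y; rewrite setD0 !inE => /eqP-> /eqP->; exists [::]; by rewrite /dwalk /= eqxx.
- by rewrite cards1.
- split.
  + by move=> B; rewrite inE => /eqP->.
  + by rewrite big_cons big_nil setU0.
  + by move=> u v'; rewrite inE.
  + move=> x i j k ij jk /=; rewrite ltnS leqn0 => /eqP k0.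
    have -> : j = 0 by lia.
    by have -> : i = 0 by lia.
- by move=> B; rewrite inE => /eqP->; rewrite cards1.
Qed.

Lemma good_dunion V E (P : seq {set T}) K Bf Xf :
  ordered_parts P V -> E \subset setX V V ->
  (forall A, A \in P -> good A (induced E A) (K A) (Bf A) (Xf A)) ->
  (forall i j u v, i < size P -> j < size P ->
     u \in nth set0 P i -> v \in nth set0 P j -> (u, v) \in E -> i <= j) ->
  exists k b X, good V E k b X.
Proof.
move=> op sE hg fw; have [psz dis UV] := op.
have [As AsP Amax] := argmax_seq K psz.
have [[hok hmon] kAs pdAs bAs] := hg As AsP.
have sAs := parts_sub op AsP.
exists (K As), (fun Z => Bf As (Z :&: As)), (flatten (map Xf P)); split.
- split.
  + move=> Z Zk; apply: (hv_lift sAs); apply: hok.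
    exact: leq_trans (subset_leq_card (subsetIl Z As)) Zk.
  + move=> Z Z' ZZ' Z'k; apply: hmon; first exact: setSI.
    exact: leq_trans (subset_leq_card (subsetIl _ _)) Z'k.
- exact: leq_trans kAs (subset_leq_card sAs).
- rewrite -(induced_full sE) -UV; apply: dunion_pd => //.
  by move=> A AP; case: (hg A AP).
- move=> B /flattenP[s /mapP[A AP ->] BA]; have [_ _ _ hb] := hg A AP.
  apply: leq_trans (hb B BA) _; rewrite ltnS; exact: Amax.
Qed.


Lemma good_series V E (P : seq {set T}) K Bf Xf :
  ordered_parts P V -> E \subset setX V V ->
  (forall A, A \in P -> good A (induced E A) (K A) (Bf A) (Xf A)) ->
  (forall i j u v, i < size P -> j < size P -> i != j ->
     u \in nth set0 P i -> v \in nth set0 P j -> (u, v) \in E) ->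
  exists k b X, good V E k b X.
Proof.
move=> op sE hg ser; have [psz dis UV] := op.
pose g A := K A + #|V :\: A|.
have [As AsP Amin] := argmin_seq g psz.
have [[hok hmon] kAs pdAs bAs] := hg As AsP.
have sAs := parts_sub op AsP.
pose D := V :\: As.
pose k := g As.
have kV : k < #|V|.
  have := cardsID As V; rewrite (setIidPr sAs) /k /g; lia.
pose b Z := if [pick A | (A \in P) && (V :\: A \subset Z)] is Some A
            then Bf A (Z :&: A) else V :\: Z.
have cardZA : forall Z A, A \in P -> V :\: A \subset Z -> #|Z| <= k ->
    #|Z :&: A| <= K A.
  move=> Z A AP sub Zk.
  have e : (Z :&: A) :&: (V :\: A) = set0.
    by apply/setP=> x; rewrite !inE; case: (x \in A); rewrite ?andbF.
  have h : #|(Z :&: A) :|: (V :\: A)| <= #|Z|.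
    by apply: subset_leq_card; rewrite subUset subsetIl sub.
  have := cardsU (Z :&: A) (V :\: A); rewrite e cards0 subn0 => ec.
  have := Amin A AP; rewrite /g /k /g in Zk *; lia.
have okZ : forall Z, #|Z| <= k -> hv_ok V E (b Z) Z.
  move=> Z Zk; rewrite /b; case: pickP => [A /andP[AP sub]|none].
    have [[hokA _] _ _ _] := hg A AP.
    apply: (hv_lift (parts_sub op AP)); apply: hokA; exact: cardZA.
  have notsub : forall i, i < size P -> exists2 z, z \in V :\: Z & z \notin nth set0 P i.
    move=> i il; have h := none (nth set0 P i); rewrite mem_nth //= in h.
    move/negbT/subsetPn: h => [z]; rewrite !inE => /andP[zA zV] zZ.
    by exists z; rewrite ?inE ?zZ ?zV.
  split.
  - by have [z zVZ _] := notsub 0 psz; apply/set0Pn; exists z.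
  - exact: subxx.
  - move=> x y; rewrite !inE => /andP[xZ xV] /andP[yZ yV].
    have [i [il xi]] := parts_mem op xV.
    have [j [jl yj]] := parts_mem op yV.
    case: (eqVneq i j) => [eij|nij].
      have [z zVZ zn] := notsub i il.
      move: (zVZ); rewrite inE => /andP[zZ zV].
      have [l [ll zl]] := parts_mem op zV.
      have nil : i != l by apply: contraNneq zn => ->.
      exists [:: z; y]; rewrite /dwalk /= !inE zZ zV yZ yV eqxx /= !andbT.
      rewrite (ser i l x z) ?(ser l j z y) //.
      by rewrite -eij eq_sym.
    exists [:: y]; rewrite /dwalk /= !inE yZ yV eqxx /= !andbT.
    exact: (ser i j).
exists k, b, (map (fun B => B :|: D) (Xf As)); split.
- split; first exact: okZ.
  move=> Z Z' ZZ' Z'k.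
  have Zk : #|Z| <= k := leq_trans (subset_leq_card ZZ') Z'k.
  have hZ' := okZ Z' Z'k; have hZ := okZ Z Zk.
  move: hZ hZ'; rewrite /b.
  case: (pickP (fun A => (A \in P) && (V :\: A \subset Z'))) => [A' /andP[A'P s']|n'];
  case: (pickP (fun A => (A \in P) && (V :\: A \subset Z))) => [A /andP[AP s]|n].
  + move=> _ _; case: (eqVneq A A') => [eA|ne].
      rewrite -eA; have [[_ hmA] _ _ _] := hg A AP; apply: hmA; first exact: setSI.
      by apply: cardZA => //; rewrite eA.
    have VZ : V \subset Z'.
      apply/subsetP=> x xV; case xA: (x \in A).
        have := disjointFr (parts_dis op AP A'P ne) xA => xA'.
        by apply: (subsetP s'); rewrite inE xA' xV.
      by apply: (subsetP ZZ'); apply: (subsetP s); rewrite inE xA xV.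
    have := subset_leq_card VZ; lia.
  + move=> _ [_ sub _]; apply: (subset_trans sub); exact: setDS.
  + by move=> _ _; have := n' A; rewrite AP (subset_trans s ZZ').
  + by move=> _ _; exact: setDS.
- exact: kV.
- have [sX UX aX cX] := pdAs.
  have Xne : 0 < size (Xf As).
    rewrite lt0n; apply/negP=> /eqP/size0nil e; move: UX; rewrite e big_nil => e'.
    by move: kAs; rewrite -e' cards0.
  have inall : forall i y, i < size (Xf As) -> y \in D ->
      y \in nth set0 (map (fun B => B :|: D) (Xf As)) i.
    by move=> i y il yD; rewrite (nth_map set0) // inE yD orbT.
  have somebag : forall y, y \in V -> exists i, i < size (Xf As) /\
      y \in nth set0 (map (fun B => B :|: D) (Xf As)) i.
    move=> y yV; case yA: (y \in As).
      have /bigcup_nthP[i [il yi]] : y \in \bigcup_(B <- Xf As) B by rewrite UX.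
      by exists i; split=> //; rewrite (nth_map set0) // inE yi.
    by exists 0; split=> //; apply: inall; rewrite // inE yA yV.
  split.
  + move=> B /mapP[B0 B0X ->]; rewrite subUset subsetDl andbT.
    exact: subset_trans (sX _ B0X) sAs.
  + apply/setP=> x; apply/bigcup_nthP/idP => [[i [il xi]]|xV].
      rewrite size_map in il; rewrite (nth_map set0) // inE in xi.
      case/orP: xi => [xi|]; last by rewrite inE => /andP[].
      apply: (subsetP sAs); rewrite -UX; apply/bigcup_nthP; by exists i.
    by have [i [il xi]] := somebag x xV; exists i; rewrite size_map.
  + move=> u v uv; have := subsetP sE _ uv; rewrite inE /= => /andP[uV vV].
    case uA: (u \in As); case vA: (v \in As).
    * have h : (u, v) \in induced E As by rewrite inducedP uv uA vA.
      have [i [j [ij js ui vj]]] := aX u v h.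
      have il : i < size (Xf As) by apply: leq_ltn_trans ij js.
      exists i, j; rewrite size_map !(nth_map set0) // !inE ui vj.
      by split.
    * have [i [il ui]] := somebag u uV.
      by exists i, i; rewrite size_map; split=> //; apply: inall; rewrite // inE vA vV.
    * have [j [jl vj]] := somebag v vV.
      by exists j, j; rewrite size_map; split=> //; apply: inall; rewrite // inE uA uV.
    * have [j [jl vj]] := somebag v vV.
      by exists j, j; rewrite size_map; split=> //; apply: inall; rewrite // inE uA uV.
  + move=> x i j k' ij jk; rewrite size_map => ks.
    have il : i < size (Xf As) by lia.
    have jl : j < size (Xf As) by lia.
    rewrite !(nth_map set0) // !in_setU.
    case xD: (x \in D); first by rewrite !orbT.
    rewrite !orbF; exact: cX.
- move=> B /mapP[B0 B0X ->].
  have := cardsU B0 D; have := bAs B0 B0X; rewrite /k /g /D; lia.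
Qed.

Lemma good_main V E : ext_dcograph V E -> exists k b X, good V E k b X.
Proof.
elim=> [v|V' E' P op sE _ IH ser|V' E' P op sE _ IH fw].
- by exists 0, (fun _ => [set v]), [:: [set v]]; apply: good_single.
- have [K [Bf [Xf HR]]] := fin_choice IH.
  exact: (good_series op sE HR ser).
- have [K [Bf [Xf HR]]] := fin_choice IH.
  exact: (good_dunion op sE HR fw).
Qed.

End Main2.

Theorem theorem5p6 (T : finType) (V : {set T}) (E : {set T * T}) :
  ext_dcograph V E -> dpw V E = dtw V E.
Proof.
move=> h; have [k [b [X [hv kV pd bX]]]] := good_main h.
have Vpos : 0 < #|V| by apply: leq_ltn_trans kV.
have wX : dpath_width X <= k.
  rewrite /dpath_width; have : \max_(B <- X) #|B| <= k.+1 by apply/bigmax_leqP_seq => B BX _; apply: bX.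
  lia.
pose Pp := fun n => exists X, is_dpath_decomp V E X /\ dpath_width X = n.
have [[Xs [pds wXs]] mindpw] := min_natP (P := Pp) (ex_intro _ X (conj pd erefl)).
have -> : dpw V E = min_nat Pp by [].
have [I [ET [Xt [W [td wt]]]]] := pd_to_td Vpos pds.
pose Pt := fun n => exists (I : finType) (ET : rel I) (X : I -> I -> {set T})
                      (W : I -> {set T}),
                      is_dtree_decomp V E ET X W /\ dtree_width ET X W = n.
have [[I' [ET' [Xt' [W' [td' wt']]]]] mindtw] :=
  min_natP (P := Pt) (ex_intro _ I (ex_intro _ ET (ex_intro _ Xt (ex_intro _ W (conj td erefl))))).
have -> : dtw V E = min_nat Pt by [].
have lb := haven_lb hv td'.
have h1 : min_nat Pt <= min_nat Pp.
  apply: leq_trans (mindtw _ _) _.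
    by exists I, ET, Xt, W; split; [exact: td | reflexivity].
  by rewrite -wXs.
have h2 : min_nat Pp <= dpath_width X by apply: mindpw; exists X.
move: wt'; rewrite /dtree_width => wt'.
apply/eqP; rewrite eqn_leq h1 andbT.
apply: leq_trans h2 _; apply: leq_trans wX _; rewrite -wt'; lia.
Qed.
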